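(* Let $n\geqslant 3$ and $k=n/2$. For a vertex $\pi$ of $P_n$ with $\pi_1=i$ and $\pi_n=j$ (so $i\neq j$), define $$f(\pi)=\begin{cases} i-j, & i>j,\\ n+i-j, & i<j,\end{cases}$$ and $$c(\pi)=f(\pi)+\varepsilon(\pi),$$ where $$\varepsilon(\pi)=\begin{cases} +1, & j>k \text{ and } f(\pi)=k,\\ -1, & j>k \text{ and } f(\pi)=k+1,\\ 0, & \text{otherwise}.\end{cases}$$ (For $n$ odd, $\varepsilon\equiv 0$.) Then $c$ is a proper vertex coloring of $P_n$ with values in $\{1,\ldots,n-1\}$. Moreover, it is equitable: each of the $n-1$ color classes has exactly $n\,(n-2)!$ vertices.
   Context: For $n\geqslant 1$, the Pancake graph $P_n$ is the Cayley graph on the symmetric group $\mathrm{Sym}_n$, with permutations written in one-line notation $\pi=[\pi_1\pi_2\ldots\pi_n]$. Its generating set consists of the prefix-reversals $r_i$, $2\leqslant i\leqslant n$. Multiplying $\pi$ on the right by $r_i$ reverses the first $i$ entries: $\pi r_i=[\pi_i\pi_{i-1}\ldots\pi_1\pi_{i+1}\ldots\pi_n]$. Two vertices $\pi,\sigma$ are adjacent iff $\sigma=\pi r_i$ for some $2\leqslant i\leqslant n$. A proper coloring is equitable if the sizes of any two color classes differ by at most one. *)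

(* Defs.v *)
From mathcomp Require Import all_boot all_fingroup.
Set Implicit Arguments. Unset Strict Implicit. Unset Printing Implicit Defensive.

(* Vertices of the Pancake graph P_n: permutations of {1..n}, represented as
   {perm 'I_n} (values 0..n-1, shifted by one in the one-line notation). *)

Definition oneline (n : nat) (p : {perm 'I_n}) : seq nat :=
  [seq (val (p x)).+1 | x <- enum 'I_n].

Definition pfirst (n : nat) (p : {perm 'I_n}) : nat := nth 0 (oneline p) 0.
Definition plast (n : nat) (p : {perm 'I_n}) : nat := nth 0 (oneline p) n.-1.

Definition pancake_adj (n : nat) (p q : {perm 'I_n}) : Prop :=
  exists i, 2 <= i <= n /\
    oneline q = rev (take i (oneline p)) ++ drop i (oneline p).

Definition fcol (n : nat) (p : {perm 'I_n}) : nat :=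
  let i := pfirst p in let j := plast p in
  if j < i then i - j else n + i - j.

(* c(pi) = f(pi) + eps(pi), with k = n/2 (possibly a half-integer):
   "j > k" is 2j > n, "f = k" is 2f = n, "f = k+1" is 2f = n+2. *)
Definition pcolor (n : nat) (p : {perm 'I_n}) : nat :=
  let j := plast p in let f := fcol p in
  if n < 2 * j then
    (if 2 * f == n then f + 1 else if 2 * f == n + 2 then f - 1 else f)
  else f.

(* Main.v *)
Require Import Defs.
From mathcomp Require Import all_boot all_fingroup.
From mathcomp Require Import zify.


Definition Gc (n i j : nat) : nat :=
  let f := if j < i then i - j else n + i - j in
  if n < 2 * j then
    (if 2 * f == n then f + 1 else if 2 * f == n + 2 then f - 1 else f)
  else f.

Ltac split_ifs :=
  repeat (match goal with |- context [if ?b then _ else _] =>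
     lazymatch b with context [if _ then _ else _] => fail | _ =>
     let E := fresh "E" in case E: b => /= end end).

Lemma L1 n i1 i2 j : 3 <= n -> 1 <= i1 <= n -> 1 <= i2 <= n -> 1 <= j <= n ->
  i1 != j -> i2 != j -> i1 != i2 -> Gc n i1 j != Gc n i2 j.
Proof. rewrite /Gc /=. split_ifs; lia. Qed.

Lemma L2 n i j : 3 <= n -> 1 <= i <= n -> 1 <= j <= n ->
  i != j -> Gc n i j != Gc n j i.
Proof. rewrite /Gc /=. split_ifs; lia. Qed.

Lemma L3 n i j : 3 <= n -> 1 <= i <= n -> 1 <= j <= n ->
  i != j -> 1 <= Gc n i j <= n - 1.
Proof. rewrite /Gc /=. split_ifs; lia. Qed.

Definition wit n j col :=
  let f := if (n < 2 * j) && (2 * col == n + 2) then col - 1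
           else if (n < 2 * j) && (2 * col == n) then col + 1 else col in
  if j + f <= n then j + f else j + f - n.

Lemma L4 n j col : 3 <= n -> 1 <= j <= n -> 1 <= col <= n - 1 ->
  [/\ 1 <= wit n j col <= n, wit n j col != j & Gc n (wit n j col) j = col].
Proof. rewrite /wit /Gc /=. split_ifs; split; lia. Qed.

Section S.
Variable m : nat.
Hypothesis hm : 2 <= m.
Local Notation n := m.+1.
Local Notation T := {perm 'I_n}.

Lemma size_oneline (p : T) : size (oneline p) = n.
Proof. by rewrite /oneline size_map size_enum_ord. Qed.

Lemma nth_oneline (p : T) (x : 'I_n) : nth 0 (oneline p) x = (p x).+1.
Proof. by rewrite /oneline (nth_map x) ?size_enum_ord // nth_ord_enum. Qed.

Lemma pfirstE (p : T) : pfirst p = (p ord0).+1.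
Proof. by rewrite /pfirst -(nth_oneline p ord0). Qed.

Lemma plastE (p : T) : plast p = (p ord_max).+1.
Proof. by rewrite /plast -(nth_oneline p ord_max). Qed.

Lemma fl_neq (p : T) : pfirst p != plast p.
Proof.
rewrite pfirstE plastE eqSS; apply/negP => /eqP /val_inj /perm_inj.
by move/(congr1 val) => /= h; move: hm; rewrite -h.
Qed.

Lemma adj_cases (p q : T) : pancake_adj p q ->
  (plast q = plast p /\ exists x : 'I_n, x != ord0 /\ pfirst q = (p x).+1)
  \/ (pfirst q = plast p /\ plast q = pfirst p).
Proof.
case=> i [/andP [hi2 hin] E].
have Hn := size_oneline p.
have Ht : size (take i (oneline p)) = i by rewrite size_take Hn; case: ltnP hin; lia.
have F : pfirst q = nth 0 (oneline p) i.-1.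
  rewrite /pfirst E nth_cat size_rev Ht (_ : 0 < i); last lia.
  rewrite nth_rev Ht; last lia.
  rewrite nth_take; last lia.
  congr nth; lia.
case: (ltnP i n) => hi.
- left; split.
    rewrite /plast E nth_cat size_rev Ht ltnNge (_ : i <= n.-1) //=.
    by rewrite nth_drop; congr nth; lia.
  have hi1 : i.-1 < n by lia.
  exists (Ordinal hi1); split; first by apply/eqP => /(congr1 val) /=; lia.
  by rewrite F -(nth_oneline p (Ordinal hi1)).
- right; have ? : i = n by lia.
  subst i.
  split.
    by rewrite F plastE -(nth_oneline p ord_max).
  rewrite /plast E nth_cat size_rev Ht /= ltnSn nth_rev Ht // subnn.
  by rewrite nth_take // pfirstE -(nth_oneline p ord0).
Qed.

Definition key (p : T) := (p ord0, p ord_max).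

Lemma fib_le (u v : 'I_n * 'I_n) : u.1 != u.2 -> v.1 != v.2 ->
  #|[set p : T | key p == u]| <= #|[set p : T | key p == v]|.
Proof.
case: u => a b; case: v => a' b' /= hab hab'.
pose s : T := (tperm a a' * tperm (tperm a a' b) b')%g.
rewrite -(card_imset _ (mulIg s)); apply: subset_leq_card.
apply/subsetP => x /imsetP [p]; rewrite inE => /eqP [ha hb] ->.
have hb1 : tperm a a' b != a'.
  by rewrite -{2}(tpermL a a') (inj_eq (@perm_inj _ _)) eq_sym.
rewrite inE /key !permM ha hb tpermL tpermL (tpermD hb1) ?(eq_sym b') //.

Qed.

Lemma part (P : pred T) : #|[set p | P p]| =
  \sum_(u : 'I_n * 'I_n) #|[set p | (key p == u) && P p]|.
Proof.
rewrite -sum1_card.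
transitivity (\sum_(p in [set p | P p]) \sum_u (if u == key p then 1 else 0)).
  apply: eq_bigr => p _; rewrite (bigD1 (key p)) //= eqxx big1 // => u.
  by move/negbTE => ->.
rewrite exchange_big /=; apply: eq_bigr => u _.
rewrite -big_mkcondr -sum1_card; apply: eq_bigl => p; rewrite !inE eq_sym andbC.
by [].
Qed.

Lemma pcolorE (p : T) : pcolor p = Gc n (pfirst p) (plast p).
Proof. by []. Qed.

Definition c0 := #|[set p : T | key p == (ord0, ord_max)]|.

Lemma fibE (u : 'I_n * 'I_n) : #|[set p : T | key p == u]| = if u.1 != u.2 then c0 else 0.
Proof.
have h0 : (ord0 : 'I_n) != ord_max by apply/eqP => /(congr1 val) /=; lia.
case: ifP => h.
  by apply/eqP; rewrite eqn_leq fib_le // fib_le.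
apply/eqP; rewrite cards_eq0; apply/eqP/setP => p; rewrite !inE.
apply/negP => /eqP hk; move/negbFE: h; rewrite -hk /= => /eqP /perm_inj.
by move/eqP; rewrite (negbTE h0).
Qed.

Lemma classE col (u : 'I_n * 'I_n) :
  #|[set p : T | (key p == u) && (pcolor p == col)]| =
  if (u.1 != u.2) && (Gc n u.1.+1 u.2.+1 == col) then c0 else 0.
Proof.
case: (boolP (Gc n u.1.+1 u.2.+1 == col)) => hc; rewrite ?andbT ?andbF.
  rewrite -fibE; apply: eq_card => p; rewrite !inE.
  case: (boolP (key p == u)) => //= /eqP hk; subst u.
  by rewrite pcolorE pfirstE plastE.
apply/eqP; rewrite cards_eq0; apply/eqP/setP => p; rewrite !inE.
apply/negP => /andP [/eqP hk]; subst u; rewrite pcolorE pfirstE plastE.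
by rewrite (negbTE hc).
Qed.


Lemma inner_class col (b : 'I_n) : 1 <= col <= m ->
  \sum_(a : 'I_n) (if (a != b) && (Gc n a.+1 b.+1 == col) then c0 else 0) = c0.
Proof.
move=> hc.
have hb := ltn_ord b.
have [h1 h2 h3] := L4 n b.+1 col (ltac:(lia)) (ltac:(lia)) (ltac:(lia)).
set w := wit n b.+1 col in h1 h2 h3.
have hw : w.-1 < n by lia.
rewrite (bigD1 (Ordinal hw)) //= big1 ?addn0.
  have -> : (w.-1).+1 = w by lia.
  rewrite h3 eqxx andbT.
  have -> : (Ordinal hw != b) by rewrite -val_eqE /=; lia.
  by [].
move=> a ha; case: ifP => // /andP [hab /eqP hg]; exfalso.
rewrite -val_eqE /= in ha; rewrite -val_eqE /= in hab.
have ha' := ltn_ord a.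
have := L1 n a.+1 w b.+1 (ltac:(lia)) (ltac:(lia)) (ltac:(lia)) (ltac:(lia)) (ltac:(lia)) (ltac:(lia)) (ltac:(lia)).
by rewrite hg h3 eqxx.
Qed.

Lemma sum_class col : 1 <= col <= m -> #|[set p : T | pcolor p == col]| = n * c0.
Proof.
move=> hc; rewrite part.
rewrite (eq_bigr _ (fun u _ => classE col u)).
rewrite -(pair_bigA _ (fun a b : 'I_n => if (a != b) && (Gc n a.+1 b.+1 == col) then c0 else 0)) /=.
rewrite exchange_big /=.
rewrite (eq_bigr _ (fun b _ => @inner_class col b hc)).
by rewrite sum_nat_const card_ord.
Qed.

Lemma c0E : c0 = (m.-1)`!.
Proof.
have htot : #|[set p : T | (fun _ => true) p]| = n`!.
  by rewrite -card_Sn; apply: eq_card => p; rewrite inE.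
rewrite part in htot.
have e : forall u, #|[set p : T | (key p == u) && true]| = if u.1 != u.2 then c0 else 0.
  by move=> u; rewrite -fibE; apply: eq_card => p; rewrite !inE andbT.
rewrite (eq_bigr _ (fun u _ => e u)) in htot.
rewrite -(pair_bigA _ (fun a b : 'I_n => if (a != b) then c0 else 0)) /= in htot.
rewrite exchange_big /= in htot.
have inner : forall b : 'I_n, \sum_(a : 'I_n) (if a != b then c0 else 0) = m * c0.
  move=> b; rewrite -big_mkcond sum_nat_const.
  by rewrite (cardC1 b) card_ord.
rewrite (eq_bigr _ (fun b _ => inner b)) sum_nat_const card_ord in htot.
have hf : m`! = m * (m.-1)`!.
  have g : forall k, 0 < k -> k`! = k * (k.-1)`! by case.
  by apply: g; lia.
move: htot; rewrite factS hf !mulnA => /eqP; rewrite eqn_pmul2l; last lia.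
by move/eqP.
Qed.

End S.

Theorem theorem3 (n : nat) (hn : 3 <= n) :
  (forall p q : {perm 'I_n}, pancake_adj p q -> pcolor p <> pcolor q) /\
  (forall p : {perm 'I_n}, 1 <= pcolor p <= n - 1) /\
  (forall col, 1 <= col <= n - 1 ->
     #|[set p : {perm 'I_n} | pcolor p == col]| = n * (n - 2)`!).
Proof.
case: n hn => [|m] // hn.
have hm : 2 <= m by lia.
have bnd : forall p : {perm 'I_m.+1}, 1 <= pfirst p <= m.+1 /\ 1 <= plast p <= m.+1.
  move=> p; rewrite pfirstE plastE; have := ltn_ord (p ord0); have := ltn_ord (p ord_max).
  lia.
split; last split.
- move=> p q adj; apply/eqP.
  have [hp1 hp2] := bnd p; have [hq1 hq2] := bnd q.
  have fp := @fl_neq m hm p; have fq := @fl_neq m hm q.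
  case: (@adj_cases m hm p q adj) => [[hl [x [hx hf]]] | [h1 h2]].
  + rewrite !pcolorE hl.
    rewrite hl in fq hq2.
    apply: L1 => //.
    rewrite hf pfirstE eqSS val_eqE (inj_eq (@perm_inj _ p)).
    by rewrite eq_sym.
  + rewrite !pcolorE h1 h2; apply: L2 => //.
- move=> p; have [hp1 hp2] := bnd p; rewrite pcolorE; apply: L3 => //.
  exact: (@fl_neq m hm).
- move=> col hc; rewrite (@sum_class m hm col); last lia.
  by rewrite (@c0E m hm); congr (_ * _); congr (_`!); lia.
Qed.
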